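(* Let $G=(K\cup I,E)$ be a split graph and $(V,\mathcal{F})$ the split graph vertex shelling antimatroid defined on $G$. Let $i\in I$. Then every $i$-feasible set $F$ satisfies $\operatorname{fos}(i)\subseteq F$.
   Context: A split graph $G=(K\cup I,E)$ is a finite simple graph whose vertex set $V=K\cup I$ comes with a fixed partition into a clique $K$ and an independent set $I$. We write $u\sim v$ for adjacency, and for $F\subseteq V$, $N(F)$ is the set of vertices of $V\setminus F$ adjacent to some vertex of $F$; $N(v)=N(\{v\})$. A vertex is simplicial if its neighbours induce a clique. The split graph vertex shelling antimatroid of $G$ is $(V,\mathcal{F})$ where $F\subseteq V$ is feasible iff there is an ordering $f_1,\dots,f_{|F|}$ of $F$ such that each $f_j$ is simplicial in $G$ minus $\{f_1,\dots,f_{j-1}\}$ (the empty set is feasible). For $i\in I$, a feasible set $F$ is $i$-feasible if $i\in N(F)$. The forced set of $i\in I$ is $\operatorname{fos}(i)=\{k\in K: k\not\sim i\}\cup\{i'\in I: N(i')\not\subseteq N(i)\}$. *)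

(* Defs.v *)
From mathcomp Require Import all_boot.
Set Implicit Arguments. Unset Strict Implicit. Unset Printing Implicit Defensive.

Section SplitGraph.
Variable T : finType.

Definition simple_graph (e : rel T) : Prop :=
  symmetric e /\ irreflexive e.

Definition split_graph (e : rel T) (K I : {set T}) : Prop :=
  [/\ simple_graph e,
      K :|: I = setT, K :&: I = set0,
      {in K &, forall x y, x != y -> e x y} &
      {in I &, forall x y, ~~ e x y}].

Definition nbhd (e : rel T) (F : {set T}) : {set T} :=
  [set v | (v \notin F) && [exists u in F, e u v]].

Definition simplicial_in (e : rel T) (S : {set T}) (v : T) : bool :=
  (v \notin S) &&
  [forall x, forall y,
     [&& x \notin S, y \notin S, e v x, e v y & x != y] ==> e x y].

Fixpoint shelling_from (e : rel T) (S : {set T}) (s : seq T) : bool :=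
  if s is x :: s' then simplicial_in e S x && shelling_from e (x |: S) s'
  else true.

Definition feasible (e : rel T) (F : {set T}) : Prop :=
  exists s : seq T, shelling_from e set0 s /\ [set x in s] = F.

Definition i_feasible (e : rel T) (i : T) (F : {set T}) : Prop :=
  feasible e F /\ i \in nbhd e F.

Definition fos (e : rel T) (K I : {set T}) (i : T) : {set T} :=
  [set k in K | ~~ e k i] :|:
  [set i' in I | ~~ (nbhd e [set i'] \subset nbhd e [set i])].

End SplitGraph.

(* Main.v *)
Require Import Defs.
From mathcomp Require Import all_boot.

Lemma shelling_cat (T : finType) (e : rel T) (S : {set T}) (s1 s2 : seq T) :
  shelling_from e S (s1 ++ s2) =
  shelling_from e S s1 && shelling_from e (S :|: [set x in s1]) s2.
Proof.
elim: s1 S => [|x s1 IH] S /=.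
  by have -> : S :|: [set x in [::]] = S by apply/setP=> y; rewrite !inE orbF.
rewrite IH andbA; congr (_ && shelling_from _ _ _).
by apply/setP=> y; rewrite !inE orbA (orbC (y == x)).
Qed.

Lemma shelling_split {T : finType} (e : rel T) (S : {set T}) (s : seq T) x :
  shelling_from e S s -> x \in s ->
  exists s1 s2, [/\ s = s1 ++ x :: s2, shelling_from e S s1 &
     simplicial_in e (S :|: [set y in s1]) x].
Proof.
move=> Hs xs; move: Hs; case/splitPr: xs => s1 s2 Hs; exists s1, s2; split => //.
  by move: Hs; rewrite shelling_cat => /andP[].
by move: Hs; rewrite shelling_cat => /andP[_] /= /andP[].
Qed.

Lemma simpl_use {T : finType} (e : rel T) S v x y :
  simplicial_in e S v -> x \notin S -> y \notin S -> e v x -> e v y -> x != y ->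
  e x y.
Proof.
move=> /andP[_ /forallP H] hx hy ex ey nxy.
by move: (H x) => /forallP /(_ y); rewrite hx hy ex ey nxy.
Qed.

Arguments simpl_use {T e S v x y}.
Arguments shelling_split {T e S s x}.

Theorem mainTheorem7 (T : finType) (e : rel T) (K I : {set T}) (i : T)
    (F : {set T}) :
  split_graph e K I -> i \in I -> i_feasible e i F -> fos e K I i \subset F.
Proof.
move=> [[esym eirr] KUI KII Kcl Iind] iI [[s [Hs Fs]] Hn].
have disj : forall x, x \in K -> x \in I -> False.
  by move=> x xK xI; move/setP: KII => /(_ x); rewrite !inE xK xI.
move: Hn; rewrite inE => /andP[iF /existsP [u /andP[uF eui]]].
have uK : u \in K.
  have : u \in K :|: I by rewrite KUI inE.
  rewrite inE => /orP[//|uI]; by move: (Iind u i uI iI); rewrite eui.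
have us : u \in s by move: uF; rewrite -Fs inE.
have [s1 [s2 [sE Hs1 Hsu]]] := shelling_split Hs us.
rewrite set0U in Hsu.
have sub1 : forall y, y \in [set y in s1] -> y \in F.
  by move=> y; rewrite -Fs !inE sE mem_cat => ->.
have iS : i \notin [set y in s1] by apply/negP => /sub1; rewrite (negbTE iF).
have uS : u \notin [set y in s1] by case/andP: Hsu.
have partK : forall k, k \in K -> ~~ e k i -> k \in [set y in s1].
  move=> k kK nki; apply/negPn/negP => kS.
  have kiu : k != u by apply/eqP => ku; move: nki; rewrite ku eui.
  have euk : e u k by apply: Kcl => //; rewrite eq_sym.
  have ki : k != i by apply/eqP => ki; apply: (disj k) => //; rewrite ki.
  by move: nki; rewrite (simpl_use Hsu kS iS euk eui ki).
apply/subsetP => x; rewrite !inE => /orP[/andP[xK nxi]|/andP[xI]].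
  exact: sub1 (partK x xK nxi).
move/subsetPn => [k]; rewrite !inE => /andP[_ /existsP [w]].
rewrite !inE => /andP[/eqP -> exk] /nandP nk.
have kK : k \in K.
  have : k \in K :|: I by rewrite KUI inE.
  rewrite inE => /orP[//|kI]; by move: (Iind x k xI kI); rewrite exk.
have nik : ~~ e i k.
  case: nk => [/negbNE/eqP ki|]; last by move/existsP => H; apply/negP => eik;
    apply: H; exists i; rewrite inE eqxx eik.
  by exfalso; apply: (disj k) => //; rewrite ki.
have nki : ~~ e k i by rewrite esym.
have kS := partK k kK nki.
have ks1 : k \in s1 by move: kS; rewrite inE.
have [t1 [t2 [s1E _ Hsk]]] := shelling_split Hs1 ks1.
rewrite set0U in Hsk.
have subt : forall y, y \in [set y in t1] -> y \in [set y in s1].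
  by move=> y; rewrite !inE s1E mem_cat => ->.
apply/negPn/negP => xF.
have xS1 : x \notin [set y in s1] by apply/negP => /sub1; rewrite (negbTE xF).
have xSt : x \notin [set y in t1] by apply/negP => /subt; rewrite (negbTE xS1).
have uSt : u \notin [set y in t1] by apply/negP => /subt; rewrite (negbTE uS).
have kiu : k != u by apply/eqP => ku; move: nki; rewrite ku eui.
have eku : e k u by apply: Kcl.
have ekx : e k x by rewrite esym.
have ux : u != x by apply/eqP => ux; apply: (disj u) => //; rewrite ux.
have eux := simpl_use Hsk uSt xSt eku ekx ux.
have xi : x != i.
  by apply/eqP => xi; move: nik; rewrite -xi exk.
by move: (Iind x i xI iI); rewrite (simpl_use Hsu xS1 iS eux eui xi).
Qed.
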